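(* Let $\Delta_{1,0}=\{A=(a_{ij})\in SL_3(\mathfrak{o}) : (a_{21}\neq 0\text{ or }a_{31}\neq0)\text{ and } a_{21}a_{32}-a_{22}a_{31}=0\}$. Then $$\Delta_{1,0}=\bigsqcup_{\substack{y_1,y_2\in Y(\mathfrak{o})\\ y_2\neq I_2}}\ \bigsqcup_{d\in D(3)}\ \bigsqcup_{u\in U(3)} \varphi_2(y_1^{-1})\,\varphi_1(y_2^{-1})\,d\,u\,\Gamma_\infty(3),$$ i.e. $\Delta_{1,0}$ is the union of these sets and they are pairwise disjoint for distinct tuples $(y_1,y_2,d,u)$.
   Context: Let $\omega=e^{2\pi i/3}$, $\mathfrak{o}=\mathbb{Z}[\omega]$, $\mathfrak{o}^\times$ its unit group. Fix representatives of nonzero elements modulo units (''$c\in(\mathfrak{o}-\{0\})/\mathfrak{o}^\times$'') and, for each nonzero $c$, representatives of $\mathfrak{o}/c\mathfrak{o}$ (''$a\in\mathfrak{o}/c\mathfrak{o}$''). $Y(\mathfrak{o})=\{\begin{pmatrix}a&b\\c&d\end{pmatrix}\in SL_2(\mathfrak{o}) : c\in(\mathfrak{o}-\{0\})/\mathfrak{o}^\times,\ a\in\mathfrak{o}/c\mathfrak{o}\}\cup\{I_2\}$. $\Gamma(3)=\{A\in SL_3(\mathfrak{o}):A\equiv I_3\pmod{3\mathfrak{o}}\}$ (entrywise), $\Gamma_\infty(3)$ its subgroup of upper triangular unipotent matrices. $D(3)$: diagonal $\mathrm{diag}(i,j,k)$ with $i,j,k\in\mathfrak{o}$, $ijk=1$.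 $U(3)$: matrices $\begin{pmatrix}1&\alpha&\beta\\&1&\gamma\\&&1\end{pmatrix}$ with $\alpha,\beta,\gamma\in\{0,1,2\}+\{0,1,2\}\omega$. For $y=\begin{pmatrix}a&b\\c&d\end{pmatrix}\in SL_2(\mathfrak{o})$, $\varphi_1(y)=\begin{pmatrix}a&b&0\\c&d&0\\0&0&1\end{pmatrix}$, $\varphi_2(y)=\begin{pmatrix}1&0&0\\0&a&b\\0&c&d\end{pmatrix}$. *)

(* Defs.v *)
(* the ring o = Z[omega] is realised inside algC. *)
From HB Require Import structures.
From mathcomp Require Import all_boot all_order all_algebra all_field.
Set Implicit Arguments. Unset Strict Implicit. Unset Printing Implicit Defensive.
Import Order.TTheory GRing.Theory Num.Theory.
Local Open Scope ring_scope.

(* omega = e^{2 pi i/3} = (-1 + i sqrt 3)/2 *)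
Definition omega : algC := (-1 + 'i * sqrtC 3) / 2.

Definition inO (z : algC) : Prop := exists x y : int, z = x%:~R + y%:~R * omega.

Definition unitO (u : algC) : Prop := inO u /\ u != 0 /\ inO u^-1.

Definition dvdO (c x : algC) : Prop := exists k, inO k /\ x = k * c.

Definition nonzero_reps (Crep : algC -> Prop) : Prop :=
  (forall c, Crep c -> inO c /\ c != 0) /\
  (forall c, inO c -> c != 0 ->
     exists! c', Crep c' /\ exists u, unitO u /\ c' = u * c).

Definition residue_reps (Crep : algC -> Prop) (Arep : algC -> algC -> Prop) : Prop :=
  forall c, Crep c ->
    (forall a, Arep c a -> inO a) /\
    (forall x, inO x -> exists! a, Arep c a /\ dvdO c (x - a)).

Definition i0 : 'I_3 := @Ordinal 3 0 isT.
Definition i1 : 'I_3 := @Ordinal 3 1 isT.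
Definition i2 : 'I_3 := @Ordinal 3 2 isT.
Definition j0 : 'I_2 := @Ordinal 2 0 isT.
Definition j1 : 'I_2 := @Ordinal 2 1 isT.

Definition matO (n : nat) (A : 'M[algC]_n) : Prop := forall i j, inO (A i j).

Definition SL2O (y : 'M[algC]_2) : Prop := matO y /\ \det y = 1.
Definition SL3O (A : 'M[algC]_3) : Prop := matO A /\ \det A = 1.

Definition Yset (Crep : algC -> Prop) (Arep : algC -> algC -> Prop)
  (y : 'M[algC]_2) : Prop :=
  y = 1%:M \/ (SL2O y /\ Crep (y j1 j0) /\ Arep (y j1 j0) (y j0 j0)).

Definition Gamma3 (A : 'M[algC]_3) : Prop :=
  SL3O A /\ forall i j, dvdO 3 (A i j - (i == j)%:R).
Definition Gamma_inf3 (A : 'M[algC]_3) : Prop :=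
  Gamma3 A /\ forall i j : 'I_3, (j <= i)%N -> A i j = (i == j)%:R.

Definition mx3 (a b c d e f g h k : algC) : 'M[algC]_3 :=
  \matrix_(i < 3, j < 3)
    nth 0 (nth [::] [:: [:: a; b; c]; [:: d; e; f]; [:: g; h; k]] i) j.

Definition D3 (D : 'M[algC]_3) : Prop :=
  exists x y z, [/\ inO x, inO y, inO z, x * y * z = 1 & D = mx3 x 0 0 0 y 0 0 0 z].

Definition coefU (x : algC) : Prop :=
  exists m n : nat, [/\ (m < 3)%N, (n < 3)%N & x = m%:R + n%:R * omega].

Definition U3 (U : 'M[algC]_3) : Prop :=
  exists al be ga, [/\ coefU al, coefU be, coefU ga & U = mx3 1 al be 0 1 ga 0 0 1].

Definition phi1 (y : 'M[algC]_2) : 'M[algC]_3 :=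
  mx3 (y j0 j0) (y j0 j1) 0 (y j1 j0) (y j1 j1) 0 0 0 1.
Definition phi2 (y : 'M[algC]_2) : 'M[algC]_3 :=
  mx3 1 0 0 0 (y j0 j0) (y j0 j1) 0 (y j1 j0) (y j1 j1).

Definition Delta10 (A : 'M[algC]_3) : Prop :=
  SL3O A /\ (A i1 i0 != 0 \/ A i2 i0 != 0) /\
  A i1 i0 * A i2 i1 - A i1 i1 * A i2 i0 = 0.

Definition piece (y1 y2 : 'M[algC]_2) (d u A : 'M[algC]_3) : Prop :=
  exists g, Gamma_inf3 g /\
    A = phi2 (invmx y1) *m phi1 (invmx y2) *m d *m u *m g.

Definition index_ok (Crep : algC -> Prop) (Arep : algC -> algC -> Prop)
  (y1 y2 : 'M[algC]_2) (d u : 'M[algC]_3) : Prop :=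
  [/\ Yset Crep Arep y1, Yset Crep Arep y2, y2 <> 1%:M, D3 d & U3 u].

(* Main.v *)
Require Import Defs.
From HB Require Import structures.
From mathcomp Require Import all_boot all_order all_algebra all_field.
From mathcomp Require Import ring lra zify.
Set Implicit Arguments. Unset Strict Implicit. Unset Printing Implicit Defensive.
Import Order.TTheory GRing.Theory Num.Theory.
Local Open Scope ring_scope.

Section M3.
Variables (a b c d e f g h k : algC).
Lemma m00 : mx3 a b c d e f g h k i0 i0 = a. Proof. by rewrite mxE. Qed.
Lemma m01 : mx3 a b c d e f g h k i0 i1 = b. Proof. by rewrite mxE. Qed.
Lemma m02 : mx3 a b c d e f g h k i0 i2 = c. Proof. by rewrite mxE. Qed.
Lemma m10 : mx3 a b c d e f g h k i1 i0 = d. Proof. by rewrite mxE. Qed.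
Lemma m11 : mx3 a b c d e f g h k i1 i1 = e. Proof. by rewrite mxE. Qed.
Lemma m12 : mx3 a b c d e f g h k i1 i2 = f. Proof. by rewrite mxE. Qed.
Lemma m20 : mx3 a b c d e f g h k i2 i0 = g. Proof. by rewrite mxE. Qed.
Lemma m21 : mx3 a b c d e f g h k i2 i1 = h. Proof. by rewrite mxE. Qed.
Lemma m22 : mx3 a b c d e f g h k i2 i2 = k. Proof. by rewrite mxE. Qed.
End M3.
Definition mx3E := (m00, m01, m02, m10, m11, m12, m20, m21, m22).

Lemma ord3P (i : 'I_3) : i = i0 \/ i = i1 \/ i = i2.
Proof. case: i => [[|[|[|n]]] H] //; [left|right;left|right;right]; exact/val_inj. Qed.

Lemma det_mx3 (a b c d e f g h k : algC) : \det (mx3 a b c d e f g h k) =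
  a * (e * k - f * h) - b * (d * k - f * g) + c * (d * h - e * g).
Proof.
rewrite (expand_det_row _ ord0) !big_ord_recr big_ord0 /= /cofactor.
rewrite !(expand_det_row _ ord0) !big_ord_recr !big_ord0 /= /cofactor.
rewrite !det_mx11 !mxE /=.
rewrite !expr0 !expr1 !exprS !expr0. ring.
Qed.

Lemma mx3_eta (A : 'M[algC]_3) : A = mx3 (A i0 i0) (A i0 i1) (A i0 i2) (A i1 i0) (A i1 i1) (A i1 i2) (A i2 i0) (A i2 i1) (A i2 i2).
Proof.
apply/matrixP => i j; rewrite mxE.
case: i => [[|[|[|n]]] Hi] //; case: j => [[|[|[|m]]] Hj] //=; congr (A _ _); exact/val_inj.
Qed.

Lemma mx3_inj a b c d e f g h k a' b' c' d' e' f' g' h' k' :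
  mx3 a b c d e f g h k = mx3 a' b' c' d' e' f' g' h' k' ->
  a = a' /\ b = b' /\ c = c' /\ d = d' /\ e = e' /\ f = f' /\ g = g' /\ h = h' /\ k = k'.
Proof.
move=> E.
have F : forall i j, mx3 a b c d e f g h k i j = mx3 a' b' c' d' e' f' g' h' k' i j by rewrite E.
by move: (F i0 i0) (F i0 i1) (F i0 i2) (F i1 i0) (F i1 i1) (F i1 i2) (F i2 i0) (F i2 i1) (F i2 i2); rewrite !mx3E.
Qed.

Lemma mul_mx3 a b c d e f g h k a' b' c' d' e' f' g' h' k' :
  mx3 a b c d e f g h k *m mx3 a' b' c' d' e' f' g' h' k' =
  mx3 (a*a' + b*d' + c*g') (a*b' + b*e' + c*h') (a*c' + b*f' + c*k')
      (d*a' + e*d' + f*g') (d*b' + e*e' + f*h') (d*c' + e*f' + f*k')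
      (g*a' + h*d' + k*g') (g*b' + h*e' + k*h') (g*c' + h*f' + k*k').
Proof.
apply/matrixP => i j; rewrite !mxE !big_ord_recr big_ord0 /= !mxE /=.
case: i => [[|[|[|n]]] Hi] //; case: j => [[|[|[|m]]] Hj] //=; ring.
Qed.

Lemma scalar_mx3 (x : algC) : x%:M = mx3 x 0 0 0 x 0 0 0 x.
Proof.
apply/matrixP => i j; rewrite !mxE.
case: i => [[|[|[|n]]] Hi] //; case: j => [[|[|[|m]]] Hj] //=.
Qed.

Definition mx2 (a b c d : algC) : 'M[algC]_2 :=
  \matrix_(i < 2, j < 2) nth 0 (nth [::] [:: [:: a; b]; [:: c; d]] i) j.
Section M2.
Variables (a b c d : algC).
Lemma n00 : mx2 a b c d j0 j0 = a. Proof. by rewrite mxE. Qed.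
Lemma n01 : mx2 a b c d j0 j1 = b. Proof. by rewrite mxE. Qed.
Lemma n10 : mx2 a b c d j1 j0 = c. Proof. by rewrite mxE. Qed.
Lemma n11 : mx2 a b c d j1 j1 = d. Proof. by rewrite mxE. Qed.
End M2.
Definition mx2E := (n00, n01, n10, n11).

Lemma det_mx2 (a b c d : algC) : \det (mx2 a b c d) = a * d - b * c.
Proof.
rewrite (expand_det_row _ ord0) !big_ord_recr big_ord0 /= /cofactor.
rewrite !det_mx11 !mxE /= !expr0 !expr1. ring.
Qed.

Lemma mx2_eta (A : 'M[algC]_2) : A = mx2 (A j0 j0) (A j0 j1) (A j1 j0) (A j1 j1).
Proof.
apply/matrixP => i j; rewrite mxE.
case: i => [[|[|n]] Hi] //; case: j => [[|[|m]] Hj] //=; congr (A _ _); exact/val_inj.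
Qed.

Lemma mul_mx2 a b c d a' b' c' d' :
  mx2 a b c d *m mx2 a' b' c' d' = mx2 (a*a' + b*c') (a*b' + b*d') (c*a' + d*c') (c*b' + d*d').
Proof.
apply/matrixP => i j; rewrite !mxE !big_ord_recr big_ord0 /= !mxE /=.
case: i => [[|[|n]] Hi] //; case: j => [[|[|m]] Hj] //=; ring.
Qed.

Lemma scalar_mx2 (x : algC) : x%:M = mx2 x 0 0 x.
Proof.
apply/matrixP => i j; rewrite !mxE.
case: i => [[|[|n]] Hi] //; case: j => [[|[|m]] Hj] //=.
Qed.

Lemma mx2_inj a b c d a' b' c' d' : mx2 a b c d = mx2 a' b' c' d' ->
  [/\ a = a', b = b', c = c' & d = d'].
Proof.
move=> E.
have F : forall i j, mx2 a b c d i j = mx2 a' b' c' d' i j by rewrite E.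
by move: (F j0 j0) (F j0 j1) (F j1 j0) (F j1 j1); rewrite !mx2E.
Qed.

Lemma invmx2 (y : 'M[algC]_2) : \det y = 1 ->
  invmx y = mx2 (y j1 j1) (- y j0 j1) (- y j1 j0) (y j0 j0).
Proof.
move=> D.
have U : y \in unitmx by rewrite unitmxE D unitr1.
set Z := mx2 _ _ _ _.
have YZ : y *m Z = 1%:M.
  move: D; rewrite {1}[y]mx2_eta det_mx2 => D.
  rewrite {1}[y]mx2_eta /Z mul_mx2 scalar_mx2; congr mx2; rewrite -?D; ring.
by rewrite -[invmx y]mulmx1 -YZ mulmxA mulVmx // mul1mx.
Qed.

Lemma phi1_mul y z : phi1 (y *m z) = phi1 y *m phi1 z.
Proof.
rewrite /phi1 mul_mx3 [y]mx2_eta [z]mx2_eta mul_mx2 !mx2E; congr mx3; ring.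
Qed.
Lemma phi2_mul y z : phi2 (y *m z) = phi2 y *m phi2 z.
Proof.
rewrite /phi2 mul_mx3 [y]mx2_eta [z]mx2_eta mul_mx2 !mx2E; congr mx3; ring.
Qed.
Lemma phi1_1 : phi1 1%:M = 1%:M.
Proof. by rewrite /phi1 scalar_mx2 scalar_mx3 !mx2E. Qed.
Lemma phi2_1 : phi2 1%:M = 1%:M.
Proof. by rewrite /phi2 scalar_mx2 scalar_mx3 !mx2E. Qed.

Lemma omega_rel : omega * omega = -1 - omega.
Proof.
have hi : 'i * 'i = -1 :> algC by rewrite -expr2 sqrCi.
have hs : sqrtC 3 * sqrtC 3 = 3 :> algC by rewrite -expr2 sqrtCK.
apply/eqP; rewrite -subr_eq0; apply/eqP.
rewrite /omega.
transitivity (((('i * 'i) + 1) * (sqrtC 3 * sqrtC 3) - (sqrtC 3 * sqrtC 3 - 3)) / 4 : algC).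
  by field.
by rewrite hi hs; ring.
Qed.

Definition emb (a b : int) : algC := a%:~R + b%:~R * omega.

Lemma embM a b c d : emb a b * emb c d = emb (a*c - b*d) (a*d + b*c - b*d).
Proof.
apply/eqP; rewrite -subr_eq0; apply/eqP.
rewrite /emb; transitivity ((b * d)%:~R * (omega * omega - (-1 - omega)) : algC).
  ring.
by rewrite omega_rel subrr mulr0.
Qed.
Lemma embD a b c d : emb a b + emb c d = emb (a + c) (b + d).
Proof. rewrite /emb; ring. Qed.
Lemma embN a b : - emb a b = emb (-a) (-b).
Proof. rewrite /emb; ring. Qed.
Lemma embB a b c d : emb a b - emb c d = emb (a - c) (b - d).
Proof. rewrite /emb; ring. Qed.
Lemma emb0 : emb 0 0 = 0. Proof. rewrite /emb; ring. Qed.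
Lemma emb1 : emb 1 0 = 1. Proof. rewrite /emb; ring. Qed.

Lemma emb_eq0 a b : emb a b = 0 -> a = 0 /\ b = 0.
Proof.
move=> E.
have : (a * a - a * b + b * b)%:~R = 0 :> algC.
  have -> : (a * a - a * b + b * b)%:~R = emb a b * emb (a - b) (- b).
    rewrite embM (_ : emb _ _ = emb (a * a - a * b + b * b) 0); last by congr emb; ring.
    by rewrite /emb mul0r addr0.
  by rewrite E mul0r.
move/eqP; rewrite intr_eq0 => /eqP H.
split; nia.
Qed.

Lemma emb_inj a b c d : emb a b = emb c d -> a = c /\ b = d.
Proof.
move=> E; have : emb (a - c) (b - d) = 0 by rewrite -embB E subrr.
by case/emb_eq0 => H1 H2; split; lia.
Qed.

Lemma inOP z : inO z <-> exists a b, z = emb a b.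
Proof. by []. Qed.

Lemma inO_emb a b : inO (emb a b). Proof. by exists a, b. Qed.
Lemma inO0 : inO 0. Proof. by rewrite -emb0; apply: inO_emb. Qed.
Lemma inO1 : inO 1. Proof. by rewrite -emb1; apply: inO_emb. Qed.
Lemma inOD x y : inO x -> inO y -> inO (x + y).
Proof. by move=> [a [b ->]] [c [d ->]]; rewrite embD; apply: inO_emb. Qed.
Lemma inON x : inO x -> inO (- x).
Proof. by move=> [a [b ->]]; rewrite embN; apply: inO_emb. Qed.
Lemma inOB x y : inO x -> inO y -> inO (x - y).
Proof. by move=> hx hy; apply: inOD => //; apply: inON. Qed.
Lemma inOM x y : inO x -> inO y -> inO (x * y).
Proof. by move=> [a [b ->]] [c [d ->]]; rewrite embM; apply: inO_emb. Qed.
Lemma inO_int (n : int) : inO n%:~R.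
Proof. by exists n, 0; rewrite mul0r addr0. Qed.
Lemma inO_nat (n : nat) : inO n%:R.
Proof. by exists n, 0; rewrite mul0r addr0. Qed.
Lemma inO_omega : inO omega.
Proof. by exists 0, 1; rewrite add0r mul1r. Qed.
Lemma dvdO0 c : dvdO c 0. Proof. by exists 0; split; [exact: inO0| rewrite mul0r]. Qed.
Lemma dvdOD c x y : dvdO c x -> dvdO c y -> dvdO c (x + y).
Proof. by move=> [k [hk ->]] [l [hl ->]]; exists (k + l); split; [exact: inOD|ring]. Qed.
Lemma dvdON c x : dvdO c x -> dvdO c (- x).
Proof. by move=> [k [hk ->]]; exists (- k); split; [exact: inON|ring]. Qed.
Lemma dvdOB c x y : dvdO c x -> dvdO c y -> dvdO c (x - y).
Proof. by move=> hx hy; apply: dvdOD => //; apply: dvdON. Qed.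
Lemma dvdOM c x y : inO x -> dvdO c y -> dvdO c (x * y).
Proof. by move=> hx [k [hk ->]]; exists (x * k); split; [exact: inOM|ring]. Qed.
Lemma dvdO_self c x : inO x -> dvdO c (x * c).
Proof. by move=> hx; exists x. Qed.

Definition nrm (a b : int) := a * a - a * b + b * b.

Lemma nrm_ge0 a b : 0 <= nrm a b. Proof. rewrite /nrm; nia. Qed.
Lemma nrm_eq0 a b : nrm a b = 0 -> a = 0 /\ b = 0. Proof. rewrite /nrm => H; split; nia. Qed.

Lemma round_int (m N : int) : 0 < N -> exists q, - N <= 2 * (m - q * N) < N.
Proof.
move=> hN; exists ((2 * m + N) %/ (2 * N))%Z.
have E := divz_eq (2 * m + N) (2 * N).
have h1 := modz_ge0 (2 * m + N) (_ : 2 * N != 0).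
have h2 := ltz_pmod (2 * m + N) (_ : 2 * N > 0).
lia.
Qed.

Lemma euclid_int (x1 x2 y1 y2 : int) : 0 < nrm y1 y2 -> exists q1 q2,
  nrm (x1 - (q1 * y1 - q2 * y2)) (x2 - (q1 * y2 + q2 * y1 - q2 * y2)) < nrm y1 y2.
Proof.
move=> hN.
have [q1 hq1] := round_int (x1 * (y1 - y2) + x2 * y2) hN.
have [q2 hq2] := round_int (x2 * y1 - x1 * y2) hN.
set N := nrm y1 y2 in hN hq1 hq2 *.
exists q1, q2.
set e := x1 * (y1 - y2) + x2 * y2 - q1 * N in hq1 *.
set f := x2 * y1 - x1 * y2 - q2 * N in hq2 *.
have Id : nrm (x1 - (q1 * y1 - q2 * y2)) (x2 - (q1 * y2 + q2 * y1 - q2 * y2)) * N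
   = e * e - e * f + f * f by rewrite /e /f /N /nrm; ring.
move: Id; set R := nrm _ _ => Id.
clearbody e f N R.
have P1 : 0 <= (N - 2 * e) * (N + 2 * e) by apply: mulr_ge0; lia.
have P2 : 0 <= (N - 2 * f) * (N + 2 * f) by apply: mulr_ge0; lia.
have P3 : 0 <= (N - 2 * e) * (N - 2 * f) by apply: mulr_ge0; lia.
have P4 : 0 <= (N + 2 * e) * (N + 2 * f) by apply: mulr_ge0; lia.
have : 4 * (R * N) <= 3 * (N * N) by rewrite Id; nia.
nia.
Qed.

Lemma bezout p q : inO p -> inO q -> exists g p' q' u v,
  [/\ inO g, inO p', inO q', inO u & inO v] /\
  [/\ p = g * p', q = g * q' & u * p' + v * q' = 1].
Proof.
move=> hp [a [b ->]].
move: {2}`|nrm a b|%N (leqnn `|nrm a b|%N) => n.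
elim: n p hp a b => [|n IH] p hp a b hn.
- have [-> ->] : a = 0 /\ b = 0 by apply: nrm_eq0; lia.
  exists p, 1, 0, 1, 0; split; first (by split; [done|exact: inO1|exact: inO0|exact: inO1|exact: inO0]).
  by split; rewrite ?emb0 /emb; ring.
- have [Z|NZ] := eqVneq (nrm a b) 0.
    have [-> ->] : a = 0 /\ b = 0 by apply: nrm_eq0.
    exists p, 1, 0, 1, 0; split; first (by split; [done|exact: inO1|exact: inO0|exact: inO1|exact: inO0]).
    by split; rewrite ?emb0 /emb; ring.
  have pos : 0 < nrm a b by have := nrm_ge0 a b; lia.
  case: hp => [x1 [x2 Ep]].
  have [q1 [q2 hlt]] := euclid_int x1 x2 pos.
  set r1 := x1 - _ in hlt; set r2 := x2 - _ in hlt.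
  have Edec : p = emb q1 q2 * emb a b + emb r1 r2.
    by rewrite Ep embM embD /r1 /r2; congr emb; ring.
  have hn' : (`|nrm r1 r2| <= n)%N by have := nrm_ge0 r1 r2; lia.
  have [g [p' [q' [u [v [[hg hp' hq' hu hv] [E1 E2 E3]]]]]]] :=
    IH (emb a b) (inO_emb a b) r1 r2 hn'.
  exists g, (emb q1 q2 * p' + q'), p', v, (u - v * emb q1 q2).
  split.
    split => //; first (apply: inOD => //; apply: inOM => //; apply: inO_emb).
    apply: inOB => //; apply: inOM => //; apply: inO_emb.
  split => //.
  + by rewrite Edec; rewrite /emb in E1 E2 *; rewrite E1 E2; ring.
  + by rewrite -E3; ring.
Qed.

Lemma dm3 (a : int) : exists (k : int) (m : nat), (m < 3)%N /\ a = k * 3 + m%:Z.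
Proof. exists (a %/ 3)%Z, `|(a %% 3)%Z|%N. split; lia. Qed.

Lemma coef_rep x : inO x -> exists al, coefU al /\ dvdO 3 (x - al).
Proof.
move=> [a [b ->]].
have [k [m [hm Ea]]] := dm3 a; have [l [n [hn Eb]]] := dm3 b.
exists (m%:R + n%:R * omega); split; first by exists m, n.
exists (emb k l); split; first exact: inO_emb.
rewrite Ea Eb /emb; ring.
Qed.

Lemma coefU_inO x : coefU x -> inO x.
Proof. by move=> [m [n [_ _ ->]]]; apply: inOD; [apply: inO_nat | apply: inOM; [apply: inO_nat|apply: inO_omega]]. Qed.

Lemma coefU_uniq x y : coefU x -> coefU y -> dvdO 3 (x - y) -> x = y.
Proof.
move=> [m [n [hm hn ->]]] [m' [n' [hm' hn' ->]]] [k [[p [q ->]] E]].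
have : emb (m%:Z - m'%:Z) (n%:Z - n'%:Z) = emb (p * 3) (q * 3).
  transitivity (m%:R + n%:R * omega - (m'%:R + n'%:R * omega) : algC); first by rewrite /emb; ring.
  by rewrite E /emb; ring.
case/emb_inj => h1 h2.
have -> : m = m' by lia.
have -> : n = n' by lia.
done.
Qed.

Lemma ord2P (i : 'I_2) : i = j0 \/ i = j1.
Proof. case: i => [[|[|n]] H] //; [left|right]; exact/val_inj. Qed.

Lemma matO_mx2 a b c d : inO a -> inO b -> inO c -> inO d -> matO (mx2 a b c d).
Proof.
move=> ha hb hc hd i j.
by case: (ord2P i) => ->; case: (ord2P j) => ->; rewrite !mx2E.
Qed.

Lemma matO_mx3 a b c d e f g h k : inO a -> inO b -> inO c -> inO d -> inO e -> inO f ->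
  inO g -> inO h -> inO k -> matO (mx3 a b c d e f g h k).
Proof.
move=> ha hb hc hd he hf hg hh hk i j.
by case: (ord3P i) => [->|[->|->]]; case: (ord3P j) => [->|[->|->]]; rewrite !mx3E.
Qed.

Lemma SL2O_1 : SL2O 1%:M.
Proof.
rewrite scalar_mx2; split; last by rewrite det_mx2; ring.
by apply: matO_mx2; [exact: inO1|exact: inO0|exact: inO0|exact: inO1].
Qed.

Lemma Yset_SL2O Crep Arep y : Yset Crep Arep y -> SL2O y.
Proof. by case=> [->|[]] //; exact: SL2O_1. Qed.

Lemma unitO_1 : unitO 1.
Proof. by split; [exact: inO1|split; [exact: oner_neq0| rewrite invr1; exact: inO1]]. Qed.

Lemma unitO_inv u : unitO u -> inO u^-1 /\ u != 0.
Proof. by case=> _ [? ?]. Qed.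

Lemma exists_y Crep Arep : nonzero_reps Crep -> residue_reps Crep Arep ->
  forall p q, inO p -> inO q -> exists y, Yset Crep Arep y /\ SL2O y /\
    y j1 j0 * p + y j1 j1 * q = 0.
Proof.
move=> [Cin Cuniq] Res p q hp hq.
have [g [p' [q' [u [v [[hg hp' hq' hu hv] [E1 E2 E3]]]]]]] := bezout hp hq.
have [c0|cn0] := eqVneq q' 0.
  exists 1%:M; split; first by left.
  split; first exact: SL2O_1.
  by rewrite scalar_mx2 !mx2E E2 c0; ring.
have [c' [[Cc' [w [hw Ec']]] _]] := Cuniq q' hq' cn0.
have [hwi hw0] := unitO_inv hw.
have hwO : inO w by case: hw.
set d' := w * - p'.
set a' := - u * w^-1.
set b' := - v * w^-1.
have hc'O : inO c' by rewrite Ec'; apply: inOM.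
have hd'O : inO d' by apply: inOM => //; apply: inON.
have ha'O : inO a' by apply: inOM => //; apply: inON.
have hb'O : inO b' by apply: inOM => //; apply: inON.
have [ResIn ResU] := Res c' Cc'.
have [a'' [[Ra'' [k [hk Ek]]] _]] := ResU a' ha'O.
exists (mx2 (a' - k * c') (b' - k * d') c' d').
have Det : \det (mx2 (a' - k * c') (b' - k * d') c' d') = 1.
  rewrite det_mx2 /d' /a' /b' Ec' -E3.
  transitivity ((u * p' + v * q') * (w * w^-1)); first by ring.
  by rewrite mulfV // mulr1.
have hyO : matO (mx2 (a' - k * c') (b' - k * d') c' d').
  apply: matO_mx2 => //; apply: inOB => //; apply: inOM => //.
have -> : a' - k * c' = a''.
  by apply/eqP; rewrite subr_eq -Ek; apply/eqP; ring.
split.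
  right; split; first by split => //; rewrite -(_ : a' - k * c' = a'') //; apply/eqP; rewrite subr_eq -Ek; apply/eqP; ring.
  by rewrite !mx2E.
split.
  split.
    by rewrite -(_ : a' - k * c' = a'') //; apply/eqP; rewrite subr_eq -Ek; apply/eqP; ring.
  by rewrite -(_ : a' - k * c' = a'') //; apply/eqP; rewrite subr_eq -Ek; apply/eqP; ring.
by rewrite !mx2E /d' Ec' E1 E2; ring.
Qed.

Lemma cancel_nz (x p q : algC) : (p != 0 \/ q != 0) -> x * p = 0 -> x * q = 0 -> x = 0.
Proof.
move=> [hp|hq] E1 E2.
  by move/eqP: E1; rewrite mulf_eq0 (negbTE hp) orbF => /eqP.
by move/eqP: E2; rewrite mulf_eq0 (negbTE hq) orbF => /eqP.
Qed.

Lemma eq_sub0 (x y : algC) : x - y = 0 -> x = y.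
Proof. by move/eqP; rewrite subr_eq0 => /eqP. Qed.

Lemma uniq_y Crep Arep : nonzero_reps Crep -> residue_reps Crep Arep ->
  forall y y' p q, Yset Crep Arep y -> Yset Crep Arep y' -> (p != 0 \/ q != 0) ->
  y j1 j0 * p + y j1 j1 * q = 0 -> y' j1 j0 * p + y' j1 j1 * q = 0 -> y = y'.
Proof.
move=> [Cin Cuniq] Res y y' p q Yy Yy' pq0 Ey Ey'.
have [My Dy] := Yset_SL2O Yy; have [My' Dy'] := Yset_SL2O Yy'.
move: Dy Dy'; rewrite {1}[y]mx2_eta {1}[y']mx2_eta !det_mx2 => Dy Dy'.
set a := y j0 j0 in Dy *; set b := y j0 j1 in Dy *; set c := y j1 j0 in Dy Ey *; set d := y j1 j1 in Dy Ey *.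
set a' := y' j0 j0 in Dy' *; set b' := y' j0 j1 in Dy' *; set c' := y' j1 j0 in Dy' Ey' *; set d' := y' j1 j1 in Dy' Ey' *.
have Rel : c * d' - d * c' = 0.
  apply: (cancel_nz pq0).
    transitivity (d' * (c * p + d * q) - d * (c' * p + d' * q)); first by ring.
    by rewrite Ey Ey'; ring.
  transitivity (c' * (c * p + d * q) * (-1) + c * (c' * p + d' * q)); first by ring.
  by rewrite Ey Ey'; ring.
set l := a * d' - b * c'.
set m := a' * d - b' * c.
have Hc' : c' = l * c.
  apply: eq_sub0; transitivity (c' * (1 - (a * d - b * c)) - a * (c * d' - d * c')); first by rewrite /l; ring.
  by rewrite Rel Dy; ring.
have Hd' : d' = l * d.
  apply: eq_sub0; transitivity (d' * (1 - (a * d - b * c)) - b * (c * d' - d * c')); first by rewrite /l; ring.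
  by rewrite Rel Dy; ring.
have Hc : c = m * c'.
  apply: eq_sub0; transitivity (c * (1 - (a' * d' - b' * c')) + a' * (c * d' - d * c')); first by rewrite /m; ring.
  by rewrite Rel Dy'; ring.
have Hd : d = m * d'.
  apply: eq_sub0; transitivity (d * (1 - (a' * d' - b' * c')) + b' * (c * d' - d * c')); first by rewrite /m; ring.
  by rewrite Rel Dy'; ring.
have cd0 : c != 0 \/ d != 0.
  case: (eqVneq c 0) => [c0|]; last by left.
  case: (eqVneq d 0) => [d0|]; last by right.
  by move: Dy; rewrite c0 d0 !mulr0 subrr => /eqP; rewrite eq_sym oner_eq0.
have lm : m * l = 1.
  apply: eq_sub0; apply: (cancel_nz cd0).
    by rewrite mulrBl mul1r -mulrA -Hc' -Hc subrr.
  by rewrite mulrBl mul1r -mulrA -Hd' -Hd subrr.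
have inOy : forall i j, inO (y i j) by [].
have ha : inO a := My _ _. have hb : inO b := My _ _.
have hc : inO c := My _ _. have hd : inO d := My _ _.
have ha' : inO a' := My' _ _. have hb' : inO b' := My' _ _.
have hc' : inO c' := My' _ _. have hd' : inO d' := My' _ _.
have hl : inO l by apply: inOB; apply: inOM.
have hm : inO m by apply: inOB; apply: inOM.
have [c0|cn0] := eqVneq c 0.
  have y1 : y = 1%:M.
    case: Yy => [//|[_ [Cc _]]]; by have [_ /eqP] := Cin _ Cc; rewrite -/c c0.
  have y1' : y' = 1%:M.
    case: Yy' => [//|[_ [Cc _]]]; by have [_ /eqP] := Cin _ Cc; rewrite -/c' Hc' c0 mulr0.
  by rewrite y1 y1'.
have [Cc Ac] : Crep c /\ Arep c a.
  case: Yy => [y1|[_ [Cc Ac]]] //; by move: cn0; rewrite -[c]/(y j1 j0) y1 scalar_mx2 mx2E eqxx.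
have cn0' : c' != 0 by rewrite Hc' mulf_neq0 //; apply/eqP => l0; move: lm; rewrite l0 mulr0 => /eqP; rewrite eq_sym oner_eq0.
have [Cc' Ac'] : Crep c' /\ Arep c' a'.
  case: Yy' => [y1|[_ [Cc' Ac']]] //; by move: cn0'; rewrite -[c']/(y' j1 j0) y1 scalar_mx2 mx2E eqxx.
have hcO : inO c by [].
have [c'' [_ U]] := Cuniq c hcO cn0.
have cc' : c = c'.
  have e1 := U c (conj Cc (ex_intro _ 1 (conj unitO_1 (esym (mul1r c))))).
  have lu : unitO l.
    split => //; split; first by apply/eqP => l0; move: lm; rewrite l0 mulr0 => /eqP; rewrite eq_sym oner_eq0.
    by rewrite (_ : l^-1 = m) //; apply: (mulIf (_ : l != 0)); [apply/eqP => l0; move: lm; rewrite l0 mulr0 => /eqP; rewrite eq_sym oner_eq0 | rewrite lm mulVf //; apply/eqP => l0; move: lm; rewrite l0 mulr0 => /eqP; rewrite eq_sym oner_eq0].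
  have e2 := U c' (conj Cc' (ex_intro _ l (conj lu Hc'))).
  by rewrite -e1 -e2.
have l1 : l = 1.
  apply: (mulIf cn0); rewrite mul1r -Hc'; exact: esym.
have dd' : d = d' by rewrite Hd' l1 mul1r.
rewrite -cc' -dd' in Dy'.
have [_ RU] := Res c Cc.
have [a0 [_ U2]] := RU a (inOy _ _).
have aa' : a = a'.
  have e1 := U2 a (conj Ac (ex_intro _ 0 (conj inO0 (etrans (subrr a) (esym (mul0r c)))))).
  have e2 : a0 = a'.
    apply: U2; split; first by rewrite cc'.
    exists (a * (b - b') - (a - a') * b); split.
      by apply: inOB; apply: inOM => //; apply: inOB.
    apply: eq_sub0; transitivity (- a' * (1 - (a * d - b * c)) + a * (1 - (a' * d - b' * c))); first by ring.
    by rewrite Dy Dy'; ring.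
  by rewrite -e1 e2.
have bb' : b = b'.
  apply: eq_sub0; apply: (mulIf cn0); rewrite mul0r.
  transitivity ((a * d - b' * c) - (a * d - b * c)); first by ring.
  by rewrite Dy aa' Dy' subrr.
by rewrite [y]mx2_eta [y']mx2_eta -/a -/b -/c -/d -/a' -/b' -/c' -/d' aa' bb' cc' dd'.
Qed.

Lemma gamma_form g : Gamma_inf3 g -> exists x z w,
  [/\ dvdO 3 x, dvdO 3 z & dvdO 3 w] /\ [/\ inO x, inO z & inO w] /\ g = mx3 1 x z 0 1 w 0 0 1.
Proof.
move=> [[[Mg Dg] Dv] Low].
exists (g i0 i1), (g i0 i2), (g i1 i2).
split; first by split; [move: (Dv i0 i1)|move: (Dv i0 i2)|move: (Dv i1 i2)]; rewrite /= subr0.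
split; first by split; apply: Mg.
rewrite {1}[g]mx3_eta.
by rewrite (Low i0 i0 isT) (Low i1 i0 isT) (Low i1 i1 isT) (Low i2 i0 isT) (Low i2 i1 isT) (Low i2 i2 isT).
Qed.

Lemma dug_form x y z al be ga g01 g02 g12 :
  mx3 x 0 0 0 y 0 0 0 z *m mx3 1 al be 0 1 ga 0 0 1 *m mx3 1 g01 g02 0 1 g12 0 0 1 =
  mx3 x (x * (g01 + al)) (x * (g02 + al * g12 + be)) 0 y (y * (g12 + ga)) 0 0 z.
Proof. by rewrite !mul_mx3; congr mx3; ring. Qed.

Lemma T_uniq d u g d' u' g' : D3 d -> U3 u -> Gamma_inf3 g -> D3 d' -> U3 u' -> Gamma_inf3 g' ->
  d *m u *m g = d' *m u' *m g' -> d = d' /\ u = u'.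
Proof.
move=> [x [y [z [hx hy hz xyz ->]]]] [al [be [ga [hal hbe hga ->]]]] /gamma_form [g01 [g02 [g12 [[d01 d02 d12] [[i01 i02 i12] ->]]]]].
move=> [x' [y' [z' [hx' hy' hz' xyz' ->]]]] [al' [be' [ga' [hal' hbe' hga' ->]]]] /gamma_form [g01' [g02' [g12' [[d01' d02' d12'] [[i01' i02' i12'] ->]]]]].
rewrite !dug_form => /mx3_inj [ex [e01 [e02 [_ [ey [e12 [_ [_ ez]]]]]]]].
have xn0 : x != 0 by apply/eqP => x0; move: xyz; rewrite x0 !mul0r => /eqP; rewrite eq_sym oner_eq0.
have yn0 : y != 0 by apply/eqP => y0; move: xyz; rewrite y0 mulr0 mul0r => /eqP; rewrite eq_sym oner_eq0.
subst x' y' z'.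
have E1 : g01 + al = g01' + al' by apply: (mulfI xn0).
have E3 : g12 + ga = g12' + ga' by apply: (mulfI yn0).
have E2 : g02 + al * g12 + be = g02' + al' * g12' + be' by apply: (mulfI xn0).
have aa : al = al'.
  apply: coefU_uniq => //.
  have -> : al - al' = g01' - g01 by apply: eq_sub0; rewrite -[LHS]subr0 -(subrr (g01 + al)) {2}E1; ring.
  exact: dvdOB.
have gg : ga = ga'.
  apply: coefU_uniq => //.
  have -> : ga - ga' = g12' - g12 by apply: eq_sub0; rewrite -[LHS]subr0 -(subrr (g12 + ga)) {2}E3; ring.
  exact: dvdOB.
subst al' ga'.
have bb : be = be'.
  apply: coefU_uniq => //.
  have -> : be - be' = (g02' - g02) + al * (g12' - g12).
    by apply: eq_sub0; rewrite -[LHS]subr0 -(subrr (g02 + al * g12 + be)) {2}E2; ring.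
  apply: dvdOD; first exact: dvdOB.
  apply: dvdOM; first exact: coefU_inO.
  exact: dvdOB.
by subst be'.
Qed.

Lemma T_exists t00 t01 t02 t11 t12 t22 :
  inO t00 -> inO t01 -> inO t02 -> inO t11 -> inO t12 -> inO t22 -> t00 * t11 * t22 = 1 ->
  exists d u g, [/\ D3 d, U3 u, Gamma_inf3 g & mx3 t00 t01 t02 0 t11 t12 0 0 t22 = d *m u *m g].
Proof.
move=> h00 h01 h02 h11 h12 h22 H.
set x := t01 * (t11 * t22).
set z := t02 * (t11 * t22).
set w := t12 * (t00 * t22).
have hxO : inO x by apply: inOM => //; apply: inOM.
have hzO : inO z by apply: inOM => //; apply: inOM.
have hwO : inO w by apply: inOM => //; apply: inOM.
have hx : t00 * x = t01 by rewrite /x; transitivity (t01 * (t00 * t11 * t22)); [ring | rewrite H mulr1].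
have hz : t00 * z = t02 by rewrite /z; transitivity (t02 * (t00 * t11 * t22)); [ring | rewrite H mulr1].
have hw : t11 * w = t12 by rewrite /w; transitivity (t12 * (t00 * t11 * t22)); [ring | rewrite H mulr1].
have [al [hal [k1 [hk1 E1]]]] := coef_rep hxO.
have [ga [hga [k3 [hk3 E3]]]] := coef_rep hwO.
have halO := coefU_inO hal.
have hgaO := coefU_inO hga.
have hz' : inO (z - al * (w - ga)) by apply: inOB => //; apply: inOM => //; apply: inOB.
have [be [hbe [k2 [hk2 E2]]]] := coef_rep hz'.
have hbeO := coefU_inO hbe.
exists (mx3 t00 0 0 0 t11 0 0 0 t22), (mx3 1 al be 0 1 ga 0 0 1),
       (mx3 1 (x - al) (z - al * (w - ga) - be) 0 1 (w - ga) 0 0 1).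
split.
- by exists t00, t11, t22; split.
- by exists al, be, ga; split.
- split.
    split.
      split.
        apply: matO_mx3 => //; try exact: inO1; try exact: inO0; apply: inOB => //; apply: inOB => //; apply: inOM => //; apply: inOB.
      by rewrite det_mx3; ring.
    move=> i j.
    case: (ord3P i) => [->|[->|->]]; case: (ord3P j) => [->|[->|->]]; rewrite !mx3E /= ?subrr ?subr0; try exact: dvdO0.
    + by exists k1.
    + by exists k2.
    + by exists k3.
  move=> i j.
  by case: (ord3P i) => [->|[->|->]]; case: (ord3P j) => [->|[->|->]]; rewrite !mx3E.
- rewrite dug_form; congr mx3; rewrite -?hx -?hz -?hw; ring.
Qed.

Lemma det2 (y : 'M[algC]_2) : \det y = y j0 j0 * y j1 j1 - y j0 j1 * y j1 j0.
Proof. by rewrite {1}[y]mx2_eta det_mx2. Qed.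

Lemma det_phi1 y : \det (phi1 y) = \det y.
Proof. by rewrite /phi1 det_mx3 det2; ring. Qed.
Lemma det_phi2 y : \det (phi2 y) = \det y.
Proof. by rewrite /phi2 det_mx3 det2; ring. Qed.

Lemma matO_mul3 (A B : 'M[algC]_3) : matO A -> matO B -> matO (A *m B).
Proof.
move=> hA hB; rewrite [A]mx3_eta [B]mx3_eta mul_mx3.
by apply: matO_mx3; repeat first [apply: hA | apply: hB | apply: inOD | apply: inOM].
Qed.
Lemma matO_phi1 y : matO y -> matO (phi1 y).
Proof. by move=> h; apply: matO_mx3 => //; first [exact: inO0 | exact: inO1]. Qed.
Lemma matO_phi2 y : matO y -> matO (phi2 y).
Proof. by move=> h; apply: matO_mx3 => //; first [exact: inO0 | exact: inO1]. Qed.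
Lemma matO_inv y : SL2O y -> matO (invmx y).
Proof. by move=> [h D]; rewrite invmx2 //; apply: matO_mx2 => //; apply: inON. Qed.

Lemma unit2 (y : 'M[algC]_2) : \det y = 1 -> y \in unitmx.
Proof. by move=> D; rewrite unitmxE D unitr1. Qed.

Lemma phi2K y (X : 'M[algC]_3) : \det y = 1 -> phi2 y *m (phi2 (invmx y) *m X) = X.
Proof. by move=> D; rewrite mulmxA -phi2_mul mulmxV ?unit2 // phi2_1 mul1mx. Qed.
Lemma phi2VK y (X : 'M[algC]_3) : \det y = 1 -> phi2 (invmx y) *m (phi2 y *m X) = X.
Proof. by move=> D; rewrite mulmxA -phi2_mul mulVmx ?unit2 // phi2_1 mul1mx. Qed.
Lemma phi1K y (X : 'M[algC]_3) : \det y = 1 -> phi1 y *m (phi1 (invmx y) *m X) = X.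
Proof. by move=> D; rewrite mulmxA -phi1_mul mulmxV ?unit2 // phi1_1 mul1mx. Qed.
Lemma phi1VK y (X : 'M[algC]_3) : \det y = 1 -> phi1 (invmx y) *m (phi1 y *m X) = X.
Proof. by move=> D; rewrite mulmxA -phi1_mul mulVmx ?unit2 // phi1_1 mul1mx. Qed.

Lemma phi2_ent y (A : 'M[algC]_3) :
  (phi2 y *m A) i2 i0 = y j1 j0 * A i1 i0 + y j1 j1 * A i2 i0 /\
  (phi2 y *m A) i2 i1 = y j1 j0 * A i1 i1 + y j1 j1 * A i2 i1.
Proof. by rewrite [A]mx3_eta /phi2 mul_mx3 !mx3E; split; ring. Qed.

Lemma phi1_ent y (B : 'M[algC]_3) :
  [/\ (phi1 y *m B) i1 i0 = y j1 j0 * B i0 i0 + y j1 j1 * B i1 i0,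
      (phi1 y *m B) i2 i0 = B i2 i0 &
      (phi1 y *m B) i2 i1 = B i2 i1].
Proof. by rewrite [B]mx3_eta /phi1 mul_mx3 !mx3E; split; ring. Qed.

Lemma phi1_ent2 y (B : 'M[algC]_3) :
  (phi1 y *m B) i0 i0 = y j0 j0 * B i0 i0 + y j0 j1 * B i1 i0 /\
  (phi1 y *m B) i1 i0 = y j1 j0 * B i0 i0 + y j1 j1 * B i1 i0.
Proof. by rewrite [B]mx3_eta /phi1 mul_mx3 !mx3E; split; ring. Qed.

Lemma phi2_ent2 y (B : 'M[algC]_3) :
  (phi2 y *m B) i1 i0 = y j0 j0 * B i1 i0 + y j0 j1 * B i2 i0 /\
  (phi2 y *m B) i2 i0 = y j1 j0 * B i1 i0 + y j1 j1 * B i2 i0.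
Proof. by rewrite [B]mx3_eta /phi2 mul_mx3 !mx3E; split; ring. Qed.

Lemma dug_T d u g : D3 d -> U3 u -> Gamma_inf3 g -> exists x t01 t02 y t12 z,
  d *m u *m g = mx3 x t01 t02 0 y t12 0 0 z /\ x * y * z = 1 /\ matO (d *m u *m g).
Proof.
move=> [x [y [z [hx hy hz xyz ->]]]] [al [be [ga [hal hbe hga ->]]]] /gamma_form [g01 [g02 [g12 [_ [[i01 i02 i12] ->]]]]].
rewrite dug_form; do 6 eexists; split; first reflexivity.
split => //.
have := coefU_inO hal; have := coefU_inO hbe; have := coefU_inO hga => ha hb hc.
by apply: matO_mx3; repeat first [assumption | exact: inO0 | apply: inOD | apply: inOM].
Qed.

Lemma row_nz (y : 'M[algC]_2) : \det y = 1 -> y j1 j0 != 0 \/ y j1 j1 != 0.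
Proof.
rewrite det2 => D.
case: (eqVneq (y j1 j0) 0) => [h0|]; last by left.
case: (eqVneq (y j1 j1) 0) => [h1|]; last by right.
by move: D; rewrite h0 h1 !mulr0 subrr => /eqP; rewrite eq_sym oner_eq0.
Qed.

Lemma Yc_nz Crep Arep y : nonzero_reps Crep -> Yset Crep Arep y -> y <> 1%:M -> y j1 j0 != 0.
Proof. by move=> [Cin _] [//|[_ [Cc _]]] _; case: (Cin _ Cc). Qed.

Lemma piece_facts Crep Arep y1 y2 d u A : nonzero_reps Crep ->
  index_ok Crep Arep y1 y2 d u -> piece y1 y2 d u A ->
  exists g T, [/\ Gamma_inf3 g, T = d *m u *m g, phi2 y1 *m A = phi1 (invmx y2) *m T,
     (A i1 i0 != 0 \/ A i2 i0 != 0) &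
     y1 j1 j0 * A i1 i0 + y1 j1 j1 * A i2 i0 = 0 /\ y1 j1 j0 * A i1 i1 + y1 j1 j1 * A i2 i1 = 0]
  /\ [/\ (phi1 (invmx y2) *m T) i1 i0 != 0, T i1 i0 = 0, matO T & \det T = 1]
  /\ A = phi2 (invmx y1) *m (phi1 (invmx y2) *m T).
Proof.
move=> NR [Y1 Y2 n2 D U] [g [G EA]].
have [_ D1] := Yset_SL2O Y1; have [_ D2] := Yset_SL2O Y2.
set T := d *m u *m g.
have EA2 : A = phi2 (invmx y1) *m (phi1 (invmx y2) *m T) by rewrite EA /T !mulmxA.
have [x [t01 [t02 [y [t12 [z [ET [xyz MT]]]]]]]] := dug_T D U G.
rewrite -/T in ET MT.
have HB : phi2 y1 *m A = phi1 (invmx y2) *m T by rewrite EA2 phi2K.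
have xn0 : x != 0 by apply/eqP => x0; move: xyz; rewrite x0 !mul0r => /eqP; rewrite eq_sym oner_eq0.
have c2 := Yc_nz NR Y2 n2.
have B10 : (phi1 (invmx y2) *m T) i1 i0 != 0.
  have [_ ->] := phi1_ent2 (invmx y2) T.
  rewrite invmx2 // !mx2E ET !mx3E mulr0 addr0 mulf_neq0 //.
  by rewrite oppr_eq0.
exists g, T; split; last split => //.
- split => //.
  + case: (eqVneq (A i1 i0) 0) => [h10|]; last by left.
    case: (eqVneq (A i2 i0) 0) => [h20|]; last by right.
    move: B10; rewrite -HB; have [-> _] := phi2_ent2 y1 A.
    by rewrite h10 h20 !mulr0 addr0 eqxx.
  + have [E1 E2] := phi2_ent y1 A.
    have [_ F1 F2] := phi1_ent (invmx y2) T.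
    by rewrite -E1 -E2 HB F1 F2 ET !mx3E.
- split => //; first by rewrite ET mx3E.
  by rewrite ET det_mx3 -xyz; ring.
Qed.

Unset Implicit Arguments.

Theorem theorem2p15 (Crep : algC -> Prop) (Arep : algC -> algC -> Prop) :
  nonzero_reps Crep -> residue_reps Crep Arep ->
  (forall A : 'M[algC]_3,
     Delta10 A <->
     exists y1 y2 d u, index_ok Crep Arep y1 y2 d u /\ piece y1 y2 d u A) /\
  (forall (y1 y2 y1' y2' : 'M[algC]_2) (d u d' u' A : 'M[algC]_3),
     index_ok Crep Arep y1 y2 d u -> index_ok Crep Arep y1' y2' d' u' ->
     piece y1 y2 d u A -> piece y1' y2' d' u' A ->
     [/\ y1 = y1', y2 = y2', d = d' & u = u']).
Proof.
move=> NR RR; split.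
  move=> A; split.
  - move=> [[MA DA] [nz rel]].
    have [y1 [Y1 [[MY1 D1] E1]]] := exists_y NR RR (MA i1 i0) (MA i2 i0).
    have E1' : y1 j1 j0 * A i1 i1 + y1 j1 j1 * A i2 i1 = 0.
      apply: (cancel_nz nz).
        transitivity (A i1 i1 * (y1 j1 j0 * A i1 i0 + y1 j1 j1 * A i2 i0)
           + y1 j1 j1 * (A i1 i0 * A i2 i1 - A i1 i1 * A i2 i0)); first by ring.
        by rewrite E1 rel; ring.
      transitivity (A i2 i1 * (y1 j1 j0 * A i1 i0 + y1 j1 j1 * A i2 i0)
         - y1 j1 j0 * (A i1 i0 * A i2 i1 - A i1 i1 * A i2 i0)); first by ring.
      by rewrite E1 rel; ring.
    set B := phi2 y1 *m A.
    have MB : matO B by apply: matO_mul3 => //; apply: matO_phi2.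
    have [B20 B21] : B i2 i0 = 0 /\ B i2 i1 = 0.
      by have [-> ->] := phi2_ent y1 A.
    have [y2 [Y2 [[MY2 D2] E2]]] := exists_y NR RR (MB i0 i0) (MB i1 i0).
    have B10 : B i1 i0 != 0.
      apply/eqP => b10.
      have [h1 h2] := phi2_ent2 y1 A; rewrite -/B in h1 h2.
      have p0 : A i1 i0 = 0.
        transitivity (y1 j1 j1 * B i1 i0 - y1 j0 j1 * B i2 i0).
          by rewrite h1 h2; move: D1; rewrite det2 => D1; rewrite -[LHS]mul1r -D1; ring.
        by rewrite b10 B20; ring.
      have q0 : A i2 i0 = 0.
        transitivity (- y1 j1 j0 * B i1 i0 + y1 j0 j0 * B i2 i0).
          by rewrite h1 h2; move: D1; rewrite det2 => D1; rewrite -[LHS]mul1r -D1; ring.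
        by rewrite b10 B20; ring.
      by case: nz; rewrite ?p0 ?q0 eqxx.
    have n2 : y2 <> 1%:M.
      move=> y21; move: E2; rewrite y21 scalar_mx2 !mx2E mul0r add0r mul1r => /eqP.
      by rewrite (negbTE B10).
    set C := phi1 y2 *m B.
    have [C10 C20 C21] : [/\ C i1 i0 = 0, C i2 i0 = 0 & C i2 i1 = 0].
      by have [-> -> ->] := phi1_ent y2 B; split.
    have MC : matO C by apply: matO_mul3 => //; apply: matO_phi1.
    have DC : \det C = 1 by rewrite !det_mulmx det_phi1 det_phi2 D1 D2 DA !mul1r.
    have EC : C = mx3 (C i0 i0) (C i0 i1) (C i0 i2) 0 (C i1 i1) (C i1 i2) 0 0 (C i2 i2).
      by rewrite {1}[C]mx3_eta C10 C20 C21.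
    have prod : C i0 i0 * C i1 i1 * C i2 i2 = 1.
      by rewrite -DC [in RHS]EC det_mx3; ring.
    have [d [u [g [D U G EDUG]]]] := T_exists (MC i0 i0) (MC i0 i1) (MC i0 i2) (MC i1 i1) (MC i1 i2) (MC i2 i2) prod.
    exists y1, y2, d, u; split; first by split.
    exists g; split => //.
    have -> : A = phi2 (invmx y1) *m (phi1 (invmx y2) *m C) by rewrite /C /B phi1VK // phi2VK.
    by rewrite EC EDUG !mulmxA.
  - move=> [y1 [y2 [d [u [IO P]]]]].
    have [g [T [[G ET HB nz [R1 R2]] [[_ _ MT DT] EA]]]] := piece_facts NR IO P.
    case: IO => Y1 Y2 _ _ _.
    have [MY1 D1] := Yset_SL2O Y1; have [MY2 D2] := Yset_SL2O Y2.
    split.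
      split.
        rewrite EA; apply: matO_mul3; first by apply: matO_phi2; apply: matO_inv.
        by apply: matO_mul3 => //; apply: matO_phi1; apply: matO_inv.
      by rewrite EA !det_mulmx det_phi2 det_phi1 !det_inv D1 D2 DT invr1 !mul1r.
    split => //.
    apply: (cancel_nz (row_nz D1)).
      transitivity ((y1 j1 j0 * A i1 i0 + y1 j1 j1 * A i2 i0) * A i2 i1
                    - (y1 j1 j0 * A i1 i1 + y1 j1 j1 * A i2 i1) * A i2 i0); first by ring.
      by rewrite R1 R2; ring.
    transitivity (- (y1 j1 j0 * A i1 i0 + y1 j1 j1 * A i2 i0) * A i1 i1
                  + (y1 j1 j0 * A i1 i1 + y1 j1 j1 * A i2 i1) * A i1 i0); first by ring.
    by rewrite R1 R2; ring.
move=> y1 y2 y1' y2' d u d' u' A IO IO' P P'.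
have [g [T [[G ET HB nz [R1 _]] [[B10 T10 _ _] EA]]]] := piece_facts NR IO P.
have [g' [T' [[G' ET' HB' _ [R1' _]] [[_ T10' _ _] EA']]]] := piece_facts NR IO' P'.
case: IO => Y1 Y2 _ D U; case: IO' => Y1' Y2' _ D' U'.
have [_ D1] := Yset_SL2O Y1; have [_ D2] := Yset_SL2O Y2.
have [_ D1'] := Yset_SL2O Y1'; have [_ D2'] := Yset_SL2O Y2'.
have e1 : y1 = y1' := uniq_y NR RR Y1 Y1' nz R1 R1'.
subst y1'.
set B := phi1 (invmx y2) *m T.
have HBB : B = phi1 (invmx y2') *m T' by rewrite /B -HB -HB'.
have S2 : y2 j1 j0 * B i0 i0 + y2 j1 j1 * B i1 i0 = 0.
  by have [<- _ _] := phi1_ent y2 B; rewrite /B phi1K.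
have S2' : y2' j1 j0 * B i0 i0 + y2' j1 j1 * B i1 i0 = 0.
  by have [<- _ _] := phi1_ent y2' B; rewrite HBB phi1K.
have e2 : y2 = y2' := uniq_y NR RR Y2 Y2' (or_intror B10) S2 S2'.
subst y2'.
have TT : T = T' by rewrite -(phi1K T D2) -(phi1K T' D2) -HBB.
have [-> ->] : d = d' /\ u = u' by apply: (T_uniq D U G D' U' G'); rewrite -ET -ET'.
by split.
Qed.
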